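(* Let $\mathbb{K}$ be a field and let $\mathcal F=\{f_n(q)\}_{n=1}^\infty$ be a sequence of polynomials in $\mathbb{K}[q]$ satisfying $f_{mn}(q)=f_m(q)f_n(q^m)$ for all $m,n\in\mathbb N$. Suppose $\mathrm{supp}(\mathcal F)=S(P)$ for an infinite set $P$ of prime numbers, and $f_p(0)=1$ for all $p\in P$. Then there exists a formal power series $F_P(q)\in\mathbb{K}[[q]]$ such that \[ F_P(q)=\lim_{\substack{p\to\infty\\ p\in P}}f_p(q), \] i.e. for every $N$ there is $p_0$ such that $f_p(q)\equiv F_P(q)\pmod{q^N}$ for all $p\in P$ with $p\ge p_0$.
   Context: $\mathbb N=\{1,2,3,\dots\}$. $\mathrm{supp}(\mathcal F)=\{n\in\mathbb N: f_n(q)\ne0\}$. For a set $P$ of primes, $S(P)$ is the multiplicative semigroup of positive integers generated by $P$ (all finite products of elements of $P$, including $1$). For power series $g,h$, $g\equiv h\pmod{q^N}$ means their coefficients of $q^0,\dots,q^{N-1}$ agree. *)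

(* Defs.v *)
From mathcomp Require Import all_boot all_order all_algebra.
Set Implicit Arguments. Unset Strict Implicit. Unset Printing Implicit Defensive.
Import GRing.Theory.
Local Open Scope ring_scope.

Definition in_semigroup (P : nat -> Prop) (n : nat) : Prop :=
  exists s : seq nat, (forall p, p \in s -> P p) /\ n = (\prod_(p <- s) p)%N.

Definition fps (K : fieldType) := nat -> K.

Definition poly_fps_congr (K : fieldType) (N : nat) (g : {poly K}) (h : fps K) :=
  forall i, (i < N)%N -> g`_i = h i.

(* Main.v *)
Require Import Defs.
From mathcomp Require Import all_boot all_order all_algebra.
From Stdlib Require Import ClassicalEpsilon.
Import GRing.Theory.
Local Open Scope ring_scope.

Lemma comp_low {K : fieldType} (a : {poly K}) {g : {poly K}} {m i : nat} :
  g.[0] = 1 -> (i < m)%N -> (a * (g \Po 'X^m))`_i = a`_i.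
Proof.
move=> g0 im.
have /factor_theorem [q Hq] : root (g - 1) 0 by rewrite rootE hornerD hornerN g0 hornerC subrr.
have -> : g = 1 + q * 'X by rewrite -[g](subrK 1) Hq subr0 addrC.
rewrite comp_polyD comp_polyC comp_polyM comp_polyX mulrDr mulr1 coefD.
by rewrite mulrC -mulrA mulrC -mulrA coefXnM im addr0.
Qed.

Theorem mainTheorem5 (K : fieldType) (f : nat -> {poly K}) (P : nat -> Prop)
  (Hmult : forall m n : nat, (0 < m)%N -> (0 < n)%N ->
     f (m * n)%N = f m * (f n \Po 'X^m))
  (Hprime : forall p, P p -> prime p)
  (Hinf : forall m : nat, exists p, P p /\ (m < p)%N)
  (Hsupp : forall n : nat, (0 < n)%N -> (f n != 0 <-> in_semigroup P n))
  (H0 : forall p, P p -> (f p).[0] = 1) :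
  exists F : fps K, forall N : nat, exists p0 : nat,
    forall p, P p -> (p0 <= p)%N -> poly_fps_congr N (f p) F.
Proof.
have key : forall p q i, P p -> P q -> (i < p)%N -> (i < q)%N -> (f p)`_i = (f q)`_i.
  move=> p q i Pp Pq ip iq.
  have p0 : (0 < p)%N by apply: leq_ltn_trans ip.
  have q0 : (0 < q)%N by apply: leq_ltn_trans iq.
  rewrite -(comp_low (f p) (H0 q Pq) ip) -(comp_low (f q) (H0 p Pp) iq).
  by rewrite -Hmult // -Hmult // mulnC.
pose pick i := proj1_sig (constructive_indefinite_description _ (Hinf i)).
have pickP i : P (pick i) /\ (i < pick i)%N.
  exact: proj2_sig (constructive_indefinite_description _ (Hinf i)).
exists (fun i => (f (pick i))`_i) => N; exists N => p Pp Np i iN.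
have [Pk ik] := pickP i.
by apply: key => //; apply: leq_trans Np.
Qed.
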